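(* Let $k\ge 2$, $n = 2k+1$, and let $A=(a_{ij})$ be an $n\times n$ matrix of the following form: $a_{i+1,i}=s$ for $1\le i\le n-1$ and $a_{ij}=0$ for $i>j+1$; $a_{1j}=t$ for $1\le j\le k$, $a_{1j}=0$ for $k+1\le j\le 2k$, $a_{1n}=t$; for $2\le i\le k+1$: $a_{ij}=t$ for $k+1\le j\le 2k$ and $a_{in}=0$; for $k+2\le i\le n$: $a_{in}=t$; and the remaining (''free'') entries $a_{ij}$ with $2\le i\le j\le k$ or $k+2\le i\le j\le 2k$ each lie in $\{0,t\}$. If at least one free entry equals $t$, then, viewing $\det A$ as a polynomial in the indeterminates $s$ and $t$, the coefficient of the monomial $s^{n-4}t^4$ in $\det A$ is nonzero.
   Context: Every entry of $A$ is $0$, $s$ or $t$, so $\det A$ is a polynomial in $s,t$ with integer coefficients. *)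

(* Defs.v *)
From mathcomp Require Import all_boot all_order all_algebra.
Set Implicit Arguments. Unset Strict Implicit. Unset Printing Implicit Defensive.
Import GRing.Theory.
Local Open Scope ring_scope.

(* Polynomials in two indeterminates s, t with integer coefficients are
   represented as {poly {poly int}}: the outer variable is s, the inner one t. *)
Definition PST := {poly {poly int}}.
Definition var_s : PST := 'X.
Definition var_t : PST := ('X)%:P.

Definition coef_st (p : PST) (a b : nat) : int := (p`_a)`_b.

(* Indices are 0-based ordinals; I = i+1 and J = j+1 are the paper's 1-based
   indices, n = 2k+1. *)
Definition free_pos (k I J : nat) : bool :=
  ((2 <= I) && (I <= J) && (J <= k))%N ||
  ((k.+2 <= I) && (I <= J) && (J <= 2 * k))%N.

Definition special_form (k : nat) (A : 'M[PST]_((2 * k).+1)) : Prop :=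
  forall i j : 'I_((2 * k).+1),
    let I := i.+1 in let J := j.+1 in let n := (2 * k).+1 in
    ((I == J.+1)%N -> A i j = var_s) /\
    ((J.+1 < I)%N -> A i j = 0) /\
    ((I == 1)%N -> (J <= k)%N -> A i j = var_t) /\
    ((I == 1)%N -> (k.+1 <= J <= 2 * k)%N -> A i j = 0) /\
    ((I == 1)%N -> (J == n)%N -> A i j = var_t) /\
    ((2 <= I <= k.+1)%N -> (k.+1 <= J <= 2 * k)%N -> A i j = var_t) /\
    ((2 <= I <= k.+1)%N -> (J == n)%N -> A i j = 0) /\
    ((k.+2 <= I)%N -> (J == n)%N -> A i j = var_t) /\
    (free_pos k I J -> A i j = 0 \/ A i j = var_t).

(* Main.v *)
Require Import Defs.
From mathcomp Require Import all_boot all_order all_algebra.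
From mathcomp Require Import ring lra zify.
Import GRing.Theory Num.Theory.
Local Open Scope ring_scope.

Lemma hess_det (R : comNzRingType) (s : R) m : forall g : nat -> nat -> R,
  (forall i, g i.+1 i = s) -> (forall i j, (j.+1 < i)%N -> g i j = 0) ->
  \det (\matrix_(i, j < m.+1) g i j) =
  \sum_(q < m.+1) (-s)^+q * g 0%N q * \det (\matrix_(i, j < m - q) g (q.+1 + i)%N (q.+1 + j)%N).
Proof.
elim: m => [|m IH] g Hs H0.
  by rewrite big_ord1 det_mx11 det_mx00 !mxE expr0 mul1r mulr1.
rewrite (expand_det_col _ ord0) big_ord_recl big_ord_recl big1; last first.
  move=> i _; rewrite !mxE /= H0 ?mul0r //.
rewrite /cofactor !mxE /= expr0 mul1r Hs addr0 [RHS]big_ord_recl.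
congr (_ + _).
  by rewrite mul1r; congr (_ * \det _); apply/matrixP => i j; rewrite !mxE.
set g' := fun i j => g (if i == 0%N then 0%N else i.+1) j.+1.
have Hs' : forall i, g' i.+1 i = s by move=> i; rewrite /g' /= Hs.
have H0' : forall i j, (j.+1 < i)%N -> g' i j = 0.
  move=> [|i] j //= hij; rewrite /g' /= H0 //.
have -> : row' (lift ord0 ord0) (col' ord0 (\matrix_(i, j < m.+2) g i j)) = \matrix_(i, j < m.+1) g' i j.
  apply/matrixP => i j; rewrite !mxE /g' /=.
  by case: i => [[|i] hi] /=.
rewrite (IH g' Hs' H0') mulrA mulr_sumr; apply: eq_bigr => q _.
rewrite !lift0 /= exprS /g' /=.
have -> : (\matrix_(i, j < m - q) g' (q.+1 + i)%N (q.+1 + j)%N) = \matrix_(i, j < m - q) g (q.+2 + i)%N (q.+2 + j)%N.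
  by apply/matrixP => i j; rewrite !mxE /g' /=.
have -> : (bump 0 0 + 0 = 1)%N by [].
rewrite expr1; ring.
Qed.

Definition W (p : PST) (a b : nat) : int := (-1)^+a * coef_st p a b.
Definition Pos (p : PST) := forall a b, 0 <= W p a b.

Lemma W_add p q a b : W (p + q) a b = W p a b + W q a b.
Proof. by rewrite /W /coef_st !coefD mulrDr. Qed.

Lemma W_sum (I : finType) (F : I -> PST) a b :
  W (\sum_i F i) a b = \sum_i W (F i) a b.
Proof. rewrite /W /coef_st (@coef_sum {poly int}) (@coef_sum int) mulr_sumr; reflexivity. Qed.

Lemma W_t p a b : W (var_t * p) a b.+1 = W p a b.
Proof. by rewrite /W /coef_st coefCM coefXM. Qed.

Lemma W_t0 p a : W (var_t * p) a 0 = 0.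
Proof. by rewrite /W /coef_st coefCM coefXM mulr0. Qed.

Lemma W_s p a b : W (- var_s * p) a.+1 b = W p a b.
Proof. rewrite /W /coef_st mulNr coefN coefXM /= coefN exprS; ring. Qed.

Lemma W_s0 p b : W (- var_s * p) 0 b = 0.
Proof. by rewrite /W /coef_st mulNr coefN coefXM /= oppr0 coef0 mulr0. Qed.

Lemma Pos0 : Pos 0.
Proof. by move=> a b; rewrite /W /coef_st !coef0 mulr0. Qed.

Lemma Pos1 : Pos 1.
Proof.
move=> a b; rewrite /W /coef_st coef1.
case: a => [|a] /=; last by rewrite coef0 mulr0.
by rewrite coef1 expr0 mul1r; case: (b == 0)%N.
Qed.

Lemma Pos_add p q : Pos p -> Pos q -> Pos (p + q).
Proof. by move=> hp hq a b; rewrite W_add addr_ge0. Qed.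

Lemma Pos_sum (I : finType) (F : I -> PST) : (forall i, Pos (F i)) -> Pos (\sum_i F i).
Proof. by move=> h a b; rewrite W_sum; apply: sumr_ge0 => i _; apply: h. Qed.

Lemma Pos_t p : Pos p -> Pos (var_t * p).
Proof. by move=> h a [|b]; rewrite ?W_t0 ?W_t. Qed.

Lemma Pos_s p : Pos p -> Pos (- var_s * p).
Proof. by move=> h [|a] b; rewrite ?W_s0 ?W_s. Qed.

Lemma Pos_sq q p : Pos p -> Pos ((- var_s) ^+ q * p).
Proof.
elim: q => [|q IH] h; first by rewrite expr0 mul1r.
by rewrite exprS -mulrA; apply: Pos_s; apply: IH.
Qed.

Lemma W_sq q p a b : W ((- var_s) ^+ q * p) (a + q) b = W p a b.
Proof.
elim: q a => [|q IH] a; first by rewrite expr0 mul1r addn0.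
by rewrite exprS -mulrA addnS W_s IH.
Qed.

Lemma W_le_sum (I : finType) (F : I -> PST) (i0 : I) a b :
  (forall i, Pos (F i)) -> W (F i0) a b <= W (\sum_i F i) a b.
Proof.
move=> h; rewrite W_sum (bigD1 i0) //= lerDl.
by apply: sumr_ge0 => i _; apply: h.
Qed.

Section Main.
Variable n : nat.
Variable f : nat -> nat -> PST.
Hypothesis Hs : forall i, f i.+1 i = var_s.
Hypothesis H0 : forall i j, (j.+1 < i)%N -> f i j = 0.
Hypothesis HZT : forall i j, (i <= j)%N -> f i j = 0 \/ f i j = var_t.

Definition Dm p m := \det (\matrix_(i, j < m) f (p + i)%N (p + j)%N).

Lemma Dm_rec p m : Dm p m.+1 =
  \sum_(q < m.+1) (- var_s)^+q * f p (p + q)%N * Dm (p + q.+1)%N (m - q).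
Proof.
rewrite /Dm (@hess_det _ var_s m (fun i j => f (p + i)%N (p + j)%N)).
- apply: eq_bigr => q _; rewrite addn0; congr (_ * \det _).
  by apply/matrixP => i j; rewrite !mxE !addnA.
- by move=> i; rewrite addnS Hs.
- by move=> i j hij; apply: H0; lia.
Qed.

Lemma Dm_pos m p : Pos (Dm p m).
Proof.
elim: m {-2}m (leqnn m) p => [|M IH] m hm p.
  by move: hm; rewrite leqn0 => /eqP ->; rewrite /Dm det_mx00; apply: Pos1.
case: m hm => [|m] hm.
  by rewrite /Dm det_mx00; apply: Pos1.
rewrite Dm_rec; apply: Pos_sum => q; rewrite -mulrA; apply: Pos_sq.
have [->|->] := HZT p (p + q)%N (leq_addr q p); first by rewrite mul0r; apply: Pos0.
by apply: Pos_t; apply: IH; lia.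
Qed.

Lemma Dm_step p q m a b a' m' p' j :
  (q < m)%N -> a' = (a + q)%N -> m' = (m - q.+1)%N -> p' = (p + q.+1)%N ->
  j = (p + q)%N -> f p j = var_t ->
  W (Dm p' m') a b <= W (Dm p m) a' b.+1.
Proof.
case: m => [|m] // hq -> -> -> -> hf.
rewrite Dm_rec.
have := W_le_sum _ (fun q0 : 'I_m.+1 => (- var_s)^+q0 * f p (p + q0)%N * Dm (p + q0.+1)%N (m - q0))
   (Ordinal hq) (a + q) b.+1.
rewrite /= -mulrA hf W_sq W_t subSS; apply.
move=> i; rewrite -mulrA; apply: Pos_sq.
have [->|->] := HZT p (p + i)%N (leq_addr i p); first by rewrite mul0r; apply: Pos0.
by apply: Pos_t; apply: Dm_pos.
Qed.

End Main.

Theorem proposition5p8 (k : nat) (hk : (2 <= k)%N)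
    (A : 'M[PST]_((2 * k).+1)) :
  special_form A ->
  (exists i j : 'I_((2 * k).+1), free_pos k i.+1 j.+1 /\ A i j = var_t) ->
  coef_st (\det A) ((2 * k).+1 - 4) 4 != 0.
Proof.
move=> HA [i0 [j0 [Hfree Ht]]].
pose f i j := if i == j.+1 then var_s else if (j.+1 < i)%N then 0
  else if (i < (2 * k).+1)%N && (j < (2 * k).+1)%N then A (inord i) (inord j) else 0.
have Hs : forall i, f i.+1 i = var_s by move=> i; rewrite /f eqxx.
have H0 : forall i j, (j.+1 < i)%N -> f i j = 0.
  by move=> i j h; rewrite /f h; have -> : (i == j.+1) = false by lia.
have fA : forall i j : 'I_((2 * k).+1), (i <= j)%N -> f i j = A i j.
  move=> i j h; rewrite /f.
  have -> : (nat_of_ord i == j.+1) = false by lia.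
  have -> : (j.+1 < i)%N = false by lia.
  by rewrite !ltn_ord /= !inord_val.
have HZT : forall i j, (i <= j)%N -> f i j = 0 \/ f i j = var_t.
  move=> i j hij; case: (ltnP j (2 * k).+1) => hj; last first.
    left; rewrite /f; have -> : (i == j.+1) = false by lia.
    have -> : (j.+1 < i)%N = false by lia.
    have -> : (j < (2 * k).+1)%N = false by lia.
    by rewrite andbF.
  have hi : (i < (2 * k).+1)%N by lia.
  have -> : f i j = A (Ordinal hi) (Ordinal hj) := fA (Ordinal hi) (Ordinal hj) hij.
  have := HA (Ordinal hi) (Ordinal hj) => /= [[h1 [h2 [h3 [h4 [h5 [h6 [h7 [h8 h9]]]]]]]]].
  have [hi0|hi0] := eqVneq i 0%N.
    case: (leqP j.+1 k) => hjk; first by right; apply: h3; lia.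
    case: (leqP j.+1 (2 * k)) => hjk2; first by left; apply: h4; lia.
    by right; apply: h5; lia.
  case: (leqP i k) => hik.
    case: (leqP j.+1 k) => hjk; first by apply: h9; rewrite /free_pos; lia.
    case: (leqP j.+1 (2 * k)) => hjk2; first by right; apply: h6; lia.
    by left; apply: h7; lia.
  case: (leqP j.+1 (2 * k)) => hjk2; first by apply: h9; rewrite /free_pos; lia.
  by right; apply: h8; lia.
have HAm : A = \matrix_(i, j < (2 * k).+1) f (0 + i)%N (0 + j)%N.
  apply/matrixP => i j; rewrite mxE !add0n.
  case: (leqP i j) => h; first by rewrite fA.
  have := HA i j => /= [[h1 [h2 _]]].
  have [e|ne] := eqVneq (nat_of_ord i) j.+1.
    by rewrite h1 ?e // Hs.
  by rewrite h2 ?H0 //; lia.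
have fAt : forall p j (hp : (p < (2 * k).+1)%N) (hj : (j < (2 * k).+1)%N),
    (p <= j)%N -> A (Ordinal hp) (Ordinal hj) = var_t -> f p j = var_t.
  by move=> p j hp hj hpj <-; apply: (fA (Ordinal hp) (Ordinal hj)).
have fin : W (Dm f (2 * k).+1 0) 0 0 = 1.
  by rewrite /Dm det_mx00 /W /coef_st coef1 /= coef1.
suff HW : 1 <= W (\det A) ((2 * k).+1 - 4) 4.
  apply/negP => /eqP h; move: HW; rewrite /W h mulr0; by [].
rewrite HAm -/(Dm f 0 (2 * k).+1) -fin.
have fT : forall p j, (p <= j)%N -> (j < (2 * k).+1)%N ->
    ((p == 0)%N && (j.+1 <= k)%N) || ((1 <= p <= k)%N && (k.+1 <= j.+1 <= 2*k)%N)
    || ((k.+1 <= p)%N && (j.+1 == (2 * k).+1)%N) -> f p j = var_t.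
  move=> p j hpj hj hc.
  have hp : (p < (2 * k).+1)%N by lia.
  apply: (fAt p j hp hj hpj).
  have := HA (Ordinal hp) (Ordinal hj) => /= [[_ [_ [h3 [_ [_ [h6 [_ [h8 _]]]]]]]]].
  have [c1|c1] := boolP ((p == 0)%N && (j.+1 <= k)%N); first by apply: h3; lia.
  have [c2|c2] := boolP ((1 <= p <= k)%N && (k.+1 <= j.+1 <= 2*k)%N); first by apply: h6; lia.
  by apply: h8; lia.
have fij : f i0 j0 = var_t by rewrite fA // ; move: Hfree; rewrite /free_pos; lia.
case/orP: Hfree => Hc.
- have s4 : W (Dm f (2*k).+1 0) 0 0 <= W (Dm f (2*k) 1) 0 1.
    apply: (Dm_step f Hs H0 HZT (2*k) 0 1 0 0 0 0 (2*k).+1 (2*k)); try lia.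
    by apply: fT; lia.
  have s3 : W (Dm f (2*k) 1) 0 1 <= W (Dm f j0.+1 ((2*k).+1 - j0.+1)) (2*k-2-j0) 2.
    apply: (Dm_step f Hs H0 HZT j0.+1 (2*k-2-j0) ((2*k).+1 - j0.+1) 0 1 _ 1 (2*k) (2*k-1)); try lia.
    by apply: fT; lia.
  have s2 : W (Dm f j0.+1 ((2*k).+1 - j0.+1)) (2*k-2-j0) 2 <= W (Dm f i0 ((2*k).+1 - i0)) (2*k-2-i0) 3.
    apply: (Dm_step f Hs H0 HZT i0 (j0 - i0) ((2*k).+1 - i0) (2*k-2-j0) 2 _ _ _ j0); try lia.
    exact: fij.
  have s1 : W (Dm f i0 ((2*k).+1 - i0)) (2*k-2-i0) 3 <= W (Dm f 0 (2*k).+1) ((2*k).+1 - 4) 4.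
    apply: (Dm_step f Hs H0 HZT 0 (i0 - 1) (2*k).+1 (2*k-2-i0) 3 _ _ _ (i0 - 1)); try lia.
    by apply: fT; lia.
  by apply: (Order.le_trans s4); apply: (Order.le_trans s3); apply: (Order.le_trans s2).
- have s4 : W (Dm f (2*k).+1 0) 0 0 <= W (Dm f j0.+1 ((2*k).+1 - j0.+1)) (2*k-1-j0) 1.
    apply: (Dm_step f Hs H0 HZT j0.+1 (2*k-1-j0) ((2*k).+1 - j0.+1) 0 0 _ _ _ (2*k)); try lia.
    by apply: fT; lia.
  have s3 : W (Dm f j0.+1 ((2*k).+1 - j0.+1)) (2*k-1-j0) 1 <= W (Dm f i0 ((2*k).+1 - i0)) (2*k-1-i0) 2.
    apply: (Dm_step f Hs H0 HZT i0 (j0 - i0) ((2*k).+1 - i0) (2*k-1-j0) 1 _ _ _ j0); try lia.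
    exact: fij.
  have s2 : W (Dm f i0 ((2*k).+1 - i0)) (2*k-1-i0) 2 <= W (Dm f 1 (2*k)) (2*k-3) 3.
    apply: (Dm_step f Hs H0 HZT 1 (i0 - 2) (2*k) (2*k-1-i0) 2 _ _ _ (i0 - 1)); try lia.
    by apply: fT; lia.
  have s1 : W (Dm f 1 (2*k)) (2*k-3) 3 <= W (Dm f 0 (2*k).+1) ((2*k).+1 - 4) 4.
    apply: (Dm_step f Hs H0 HZT 0 0 (2*k).+1 (2*k-3) 3 _ _ _ 0); try lia.
    by apply: fT; lia.
  by apply: (Order.le_trans s4); apply: (Order.le_trans s3); apply: (Order.le_trans s2).
Qed.
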